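(* Fix $\theta>0$ and let $n\to\infty$ along integers for which $m=\theta n$ is an integer. If $\mathbf s$ is uniform on $\Phi^*_{m,n}$, then $$\mathbb E\left(\prod_{\nu=1}^m(s_\nu+1)\right)\sim\left(\frac{2(\theta+1)}{2\theta+1}\right)^{1/2}\left[\frac{(2\theta+1)^{2\theta+1}}{(4\theta)^\theta(\theta+1)^{\theta+1}}\right]^n .$$ In particular, for $\theta=1$ this is $\sim(4/3)^{1/2}(27/16)^n$.
   Context: $\Phi^*_{m,n}$ is the set of arrays $\mathbf s=(s_1,\dots,s_m)$ of nonnegative integers with $s_1+\dots+s_m=n$. $f\sim g$ means $f/g\to1$. *)

(* Defs.v *)
From mathcomp Require Import all_boot all_order all_algebra.
From mathcomp Require Import all_classical all_reals all_analysis.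
Set Implicit Arguments. Unset Strict Implicit. Unset Printing Implicit Defensive.
Import Order.TTheory GRing.Theory Num.Theory.
Local Open Scope ring_scope.

(* Phi^*_{m,n}: arrays s = (s_1,...,s_m) of nonnegative integers summing to n.
   Entries are necessarily <= n, so we index them by 'I_n.+1. *)
Definition Phi (m n : nat) : {set {ffun 'I_m -> 'I_n.+1}} :=
  [set s : {ffun 'I_m -> 'I_n.+1} | (\sum_(i < m) (s i : nat))%N == n].

Definition expect_prod (R : realType) (m n : nat) : R :=
  (\sum_(s in Phi m n) \prod_(i < m) ((s i : nat)%:R + 1)) / (#|Phi m n|%:R).

Definition rhs_asym (R : realType) (theta : R) (n : nat) : R :=
  Num.sqrt (2 * (theta + 1) / (2 * theta + 1)) *
  ((2 * theta + 1) `^ (2 * theta + 1) /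
     ((4 * theta) `^ theta * (theta + 1) `^ (theta + 1))) ^+ n.

(* Main.v *)
Require Import Defs.
From mathcomp Require Import all_boot all_order all_algebra.
From mathcomp Require Import all_classical all_reals all_analysis.
From mathcomp Require Import ring lra.
Import Order.TTheory GRing.Theory Num.Theory.
Import numFieldNormedType.Exports.
Local Open Scope ring_scope.

Section S.
Variable R : realType.

Lemma mono_der (f D : R -> R) (a b : R) : 0 < a ->
  (forall x : R, 0 < x -> is_derive x 1 f (D x)) ->
  (forall x : R, a < x -> 0 <= D x) -> a <= b -> f a <= f b.
Proof.
move=> a0 df Dp ab.
apply: (@ger0_derive1_ndecr R f a b) => //.
- move=> x; rewrite in_itv /= => /andP[ax _].
  have h := df x (lt_trans a0 ax); exact: ex_derive.
- move=> x; rewrite in_itv /= => /andP[ax _].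
  have := df x (lt_trans a0 ax) => h.
  by rewrite derive1E derive_val; apply: Dp.
- apply: derivable_within_continuous => x; rewrite in_itv /= => /andP[ax _].
  have h := df x (lt_le_trans a0 ax); exact: ex_derive.
Qed.

Lemma ln_up (y : R) : 1 <= y ->
  ln y <= (y - 1) - (y - 1)^+2 / 2 + (y - 1)^+3 / 3.
Proof.
move=> y1.
pose g : R -> R := (id - cst 1).
pose f : R -> R := g - cst (2^-1) * g^+2 + cst (3^-1) * g^+3 - (@ln R).
have df : forall x : R, 0 < x -> is_derive x 1 f ((x - 1) ^+ 3 / x).
  move=> x x0.
  have h1 := is_derive1_ln x0.
  apply: is_derive_eq.
  rewrite /g !fctE /= -![_ *: _]/(_ * _). field. by rewrite gt_eqF.
have := @mono_der f _ 1 y ltr01 df _ y1.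
rewrite /f /g !fctE /= ln1 subrr => H.
have Hd : forall x : R, 1 < x -> 0 <= (x-1)^+3/x by move=> x x1; apply: divr_ge0; [apply: exprn_ge0; lra | lra].
have {H} H := H Hd.
rewrite !expr0n /= in H; lra.
Qed.

Lemma ln_lo (y : R) : 1 <= y ->
  (y - 1) - (y - 1)^+2 / 2 + (y - 1)^+3 / 3 - (y - 1)^+4 / 4 <= ln y.
Proof.
move=> y1.
pose g : R -> R := (id - cst 1).
pose f : R -> R := (@ln R) - (g - cst (2^-1) * g^+2 + cst (3^-1) * g^+3 - cst (4^-1) * g^+4).
have df : forall x : R, 0 < x -> is_derive x 1 f ((x - 1) ^+ 4 / x).
  move=> x x0.
  have h1 := is_derive1_ln x0.
  apply: is_derive_eq.
  rewrite /g !fctE /= -![_ *: _]/(_ * _). field. by rewrite gt_eqF.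
have := @mono_der f _ 1 y ltr01 df _ y1.
rewrite /f /g !fctE /= ln1 subrr => H.
have Hd : forall x : R, 1 < x -> 0 <= (x-1)^+4/x by move=> x x1; apply: divr_ge0; [apply: exprn_ge0; lra | lra].
have {H} H := H Hd.
rewrite !expr0n /= in H; lra.
Qed.

Definition dd (x : nat) : R := ln (x`!%:R) - (x%:R + 2^-1) * ln x%:R + x%:R.

Lemma natr_pos (x : nat) : (0 < x)%N -> 0 < (x%:R : R).
Proof. by move=> h; rewrite ltr0n. Qed.

Lemma dd_step x : (0 < x)%N ->
  dd x - dd x.+1 = (x%:R + 2^-1) * ln ((x.+1)%:R / x%:R) - 1.
Proof.
move=> x0; rewrite /dd factS natrM lnM ?posrE ?ltr0n ?fact_gt0 //.
rewrite ln_div ?posrE ?ltr0n //.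
rewrite -addn1 natrD; ring.
Qed.

Lemma step_bound x : (0 < x)%N ->
  `|dd x - dd x.+1| <= 2^-1 * (x%:R^-1 - (x.+1)%:R^-1).
Proof.
move=> x0; rewrite dd_step //.
have X0 : 0 < (x%:R : R) by rewrite ltr0n.
have X1 : 1 <= (x%:R : R) by rewrite ler1n.
set X := (x%:R : R).
have -> : (x.+1)%:R = X + 1 by rewrite -addn1 natrD.
set u := X^-1.
have u0 : 0 < u by rewrite invr_gt0.
have u1 : u <= 1 by rewrite invr_le1 // unitfE gt_eqF.
have Xu : X = u^-1 by rewrite invrK.
have yu : (X + 1) / X = 1 + u by rewrite mulrDl divff ?gt_eqF // mul1r.
rewrite yu.
have y1 : 1 <= 1 + u by lra.
have hup := ln_up (1 + u) y1.
have hlo := ln_lo (1 + u) y1.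
have eu : 1 + u - 1 = u by rewrite addrAC subrr add0r.
rewrite eu in hup hlo.
set L := ln (1 + u) in hup hlo *.
have c0 : 0 <= X + 2^-1 by lra.
have h1 := ler_wpM2l c0 hup.
have h2 := ler_wpM2l c0 hlo.
have e1 : (X + 2^-1) * (u - u ^+ 2 / 2 + u ^+ 3 / 3) = 1 + u^+2/12 + u^+3/6.
  rewrite Xu; field; by rewrite gt_eqF.
have e2 : (X + 2^-1) * (u - u ^+ 2 / 2 + u ^+ 3 / 3 - u^+4/4) = 1 + u^+2/12 - u^+3/12 - u^+4/8.
  rewrite Xu; field; by rewrite gt_eqF.
have e3 : 2^-1 * (X^-1 - (X + 1)^-1) = u^+2/(2 * (1 + u)).
  rewrite Xu invrK; field; rewrite !gt_eqF //; lra.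
have e4 : u^+2/(2 * (1 + u)) - u^+2/4 = u^+2 * (1 - u) / (4 * (1 + u)).
  field; rewrite !gt_eqF //; lra.
have h4 : 0 <= u^+2 * (1 - u) / (4 * (1 + u)).
  apply: divr_ge0; last lra.
  apply: mulr_ge0; last lra.
  exact: sqr_ge0.
have u32 : u^+3 <= u^+2 by rewrite exprS -[X in _ <= X]mul1r ler_wpM2r // ?sqr_ge0.
have u2 : 0 <= u^+2 by exact: sqr_ge0.
have u21 : u^+2 <= 1 by rewrite exprn_ile1 // ltW.
have u42 : u^+4 <= u^+2.
  have -> : u^+4 = u^+2 * u^+2 by rewrite -exprD.
  nra.
rewrite e3 ler_norml; apply/andP; split; lra.
Qed.

Lemma tele x k : (0 < x)%N ->
  `|dd x - dd (x + k)| <= 2^-1 * (x%:R^-1 - (x + k)%:R^-1).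
Proof.
move=> x0; elim: k => [|k IH].
  by rewrite addn0 subrr normr0 subrr mulr0.
have := step_bound (x + k) (leq_trans x0 (leq_addr _ _)).
move=> hs; rewrite addnS.
have := ler_normD (dd x - dd (x + k)) (dd (x + k) - dd (x + k).+1).
rewrite addrA subrK => ht.
apply: le_trans ht _; apply: le_trans (lerD IH hs) _; by rewrite -mulrDr addrA subrK.
Qed.

Lemma dd_close m x y : (0 < m)%N -> (m <= x)%N -> (m <= y)%N ->
  `|dd x - dd y| <= 2^-1 * (m%:R)^-1.
Proof.
have key : forall x y, (0 < m)%N -> (m <= x)%N -> (x <= y)%N ->
   `|dd x - dd y| <= 2^-1 * (m%:R)^-1.
  move=> a b m0 ma ab.
  have a0 : (0 < a)%N by apply: leq_trans ma.
  have := tele a (b - a) a0; rewrite subnKC // => h.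
  apply: le_trans h _; rewrite ler_pM2l ?invr_gt0 //.
  have hb : 0 < (b%:R : R) by rewrite ltr0n (leq_trans a0).
  have : 0 <= (b%:R : R)^-1 by rewrite invr_ge0 ltW.
  have : (a%:R : R)^-1 <= (m%:R)^-1 by rewrite lef_pV2 ?posrE ?ltr0n ?ler_nat // (leq_trans m0).
  lra.
move=> m0 mx my; case: (leqP x y) => xy; first exact: key.
by rewrite distrC; apply: key => //; apply: ltnW.
Qed.

End S.


Section C.
Set Implicit Arguments. Unset Strict Implicit. Unset Printing Implicit Defensive.
Variable R : comRingType.

Definition Pc (n : nat) (c : nat -> R) : {poly R} := \sum_(j < n.+1) (c j)%:P * 'X^j.

Lemma gen_sum m n (c : nat -> R) :
  \sum_(s in Phi m n) \prod_(i < m) c (s i) = ((Pc n c) ^+ m)`_n.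
Proof.
have -> : (Pc n c)^+m = \prod_(i < m) Pc n c by rewrite prodr_const card_ord.
rewrite /Pc bigA_distr_bigA coef_sum.
rewrite [RHS](bigID (fun s : {ffun 'I_m -> 'I_n.+1} => s \in Phi m n)) /=.
rewrite [X in _ = _ + X]big1 ?addr0; last first.
  move=> s; rewrite inE => /negbTE sn.
  rewrite big_split /= -rmorph_prod prodrXr coefCM coefXn.
  by rewrite eq_sym sn mulr0.
apply: eq_big => // s; rewrite inE => /eqP sn.
by rewrite big_split /= -rmorph_prod prodrXr coefCM coefXn sn eqxx mulr1.
Qed.

Lemma agree_mul n (p q r : {poly R}) :
  (forall t, (t <= n)%N -> p`_t = q`_t) ->
  forall t, (t <= n)%N -> (p * r)`_t = (q * r)`_t.
Proof.
move=> h t tn; rewrite !coefM; apply: eq_bigr => i _.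
by rewrite h // (leq_trans _ tn) // -ltnS.
Qed.

Lemma agree_exp n (p q : {poly R}) k :
  (forall t, (t <= n)%N -> p`_t = q`_t) ->
  forall t, (t <= n)%N -> (p ^+ k)`_t = (q ^+ k)`_t.
Proof.
move=> h; elim: k => [|k IH] t tn; first by [].
rewrite !exprS (@agree_mul n p q (p ^+ k) h t tn) [q * p ^+ k]mulrC [q * q ^+ k]mulrC.
exact: (@agree_mul n (p ^+ k) (q ^+ k) q IH t tn).
Qed.

Lemma coefQ n t : (t <= n)%N -> (Pc n (fun _ => 1))`_t = 1.
Proof.
move=> tn; rewrite /Pc coef_sum.
rewrite (bigD1 (Ordinal (tn : (t < n.+1)%N))) //= big1 ?addr0.
  by rewrite coefCM coefXn eqxx mulr1.
move=> j /negbTE jt; rewrite coefCM coefXn mul1r.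
case: eqP => // tj; move: jt; suff -> : j == Ordinal (tn : (t < n.+1)%N) by [].
by apply/eqP/val_inj => /=.
Qed.

Lemma hockey (t j : nat) : (\sum_(k < t.+1) 'C(k + j - 1, k) = 'C(t + j, t))%N.
Proof.
elim: t => [|t IH]; first by rewrite big_ord1 /= !bin0.
rewrite big_ord_recr /= IH addSn binS addnC.
by rewrite subn1.
Qed.

Lemma coefQexp n j t : (t <= n)%N ->
  ((Pc n (fun _ => 1)) ^+ j)`_t = ('C(t + j - 1, t))%:R.
Proof.
elim: j t => [|j IH] t tn.
  rewrite expr0 coefC addn0; case: t tn => [|t] _ //=.
  by rewrite subn1 /= bin_small.
rewrite exprS coefM.
rewrite (eq_bigr (fun i : 'I_t.+1 => ('C((t - i) + j - 1, t - i))%:R)); last first.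
  move=> i _; rewrite coefQ ?mul1r ?IH //.
    by rewrite (leq_trans (leq_subr _ _)).
  by rewrite (leq_trans _ tn) // -ltnS.
rewrite -natr_sum; congr (_%:R).
rewrite (reindex_inj rev_ord_inj) /=.
rewrite (eq_bigr (fun k : 'I_t.+1 => 'C(k + j - 1, k))); last first.
  by move=> i _; rewrite subKn // -ltnS.
by rewrite hockey addnS subn1.
Qed.

Lemma Q2 n t : (t <= n)%N ->
  (Pc n (fun k => (k%:R + 1)))`_t = ((Pc n (fun _ => 1)) ^+ 2)`_t.
Proof.
move=> tn; rewrite coefQexp // addn2 subn1 /= binSn.
rewrite /Pc coef_sum.
rewrite (bigD1 (Ordinal (tn : (t < n.+1)%N))) //= big1 ?addr0.
  by rewrite coefCM coefXn eqxx mulr1 -addn1 natrD.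
move=> j /negbTE jt; rewrite coefCM coefXn.
case: eqP => [tj|]; last by rewrite mulr0.
move: jt; suff -> : j == Ordinal (tn : (t < n.+1)%N) by [].
by apply/eqP/val_inj => /=.
Qed.

Lemma sum_prod m n :
  \sum_(s in Phi m n) \prod_(i < m) ((s i : nat)%:R + 1) = ('C(n + 2 * m - 1, n))%:R :> R.
Proof.
rewrite (gen_sum m n (fun k => k%:R + 1)).
rewrite (agree_exp _ (@Q2 n)) // -exprM coefQexp //.
Qed.

Lemma card_Phi m n : (#|Phi m n|%:R : R) = ('C(n + m - 1, n))%:R.
Proof.
rewrite -sum1_card natr_sum.
rewrite (eq_bigr (fun s : {ffun 'I_m -> 'I_n.+1} => \prod_(i < m) (fun _ => 1 : R) (s i))); last first.
  by move=> s _; rewrite big1.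
by rewrite (gen_sum m n (fun _ => 1)) coefQexp.
Qed.
End C.
Unset Implicit Arguments. Set Strict Implicit.

Section D.
Variable R : realType.

Lemma lnM' (x y : R) : 0 < x -> 0 < y -> ln (x * y) = ln x + ln y.
Proof. by move=> x0 y0; rewrite lnM ?posrE. Qed.

Lemma fac_id n k : (0 < k)%N ->
  ('C(n + k - 1, n))%:R * (n`!)%:R * (k`!)%:R * (n + k)%:R
    = ((n + k)`!)%:R * k%:R :> R.
Proof.
case: k => [//|j] _.
rewrite addnS subn1 /=.
have H := congr1 (fun z : nat => z%:R : R) (bin_fact (leq_addr j n)).
rewrite /= addKn !natrM in H.
rewrite !factS !natrM -H; ring.
Qed.

Lemma ln_fac_id n k : (0 < k)%N ->
  ln (('C(n + k - 1, n))%:R : R) = ln ((n + k)`!)%:R + ln k%:R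
     - ln (n`!)%:R - ln (k`!)%:R - ln (n + k)%:R.
Proof.
move=> k0.
have p1 : 0 < (('C(n + k - 1, n))%:R : R) by rewrite ltr0n bin_gt0 -addnBA // leq_addr.
have p2 : 0 < ((n`!)%:R : R) by rewrite ltr0n fact_gt0.
have p3 : 0 < ((k`!)%:R : R) by rewrite ltr0n fact_gt0.
have p4 : 0 < ((n + k)%:R : R) by rewrite ltr0n addn_gt0 k0 orbT.
have p5 : 0 < (((n + k)`!)%:R : R) by rewrite ltr0n fact_gt0.
have p6 : 0 < (k%:R : R) by rewrite ltr0n.
have := congr1 (@ln R) (fac_id n k k0).
rewrite !lnM' ?mulr_gt0 // => H; lra.
Qed.

Lemma ln_fact (x : nat) : ln ((x`!)%:R : R) = dd R x + (x%:R + 2^-1) * ln x%:R - x%:R.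
Proof. rewrite /dd; ring. Qed.

Lemma E_formula m n : (0 < m)%N ->
  expect_prod R m n = ('C(n + 2 * m - 1, n))%:R / ('C(n + m - 1, n))%:R.
Proof. by move=> m0; rewrite /expect_prod sum_prod card_Phi. Qed.

Lemma key (t : R) n m : 0 < t -> (0 < n)%N -> m%:R = t * n%:R ->
  expect_prod R m n / rhs_asym t n =
  expR (dd R (n + 2 * m) + dd R m - dd R (2 * m) - dd R (n + m)).
Proof.
move=> t0 n0 hm.
have N0 : 0 < (n%:R : R) by rewrite ltr0n.
have M0 : 0 < (m%:R : R) by rewrite hm mulr_gt0.
have m0 : (0 < m)%N by rewrite -(ltr0n R).
have m20 : (0 < 2 * m)%N by rewrite muln_gt0 m0.
rewrite E_formula //.
set C1 := ('C(n + 2 * m - 1, n))%:R : R.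
set C2 := ('C(n + m - 1, n))%:R : R.
have C10 : 0 < C1 by rewrite ltr0n bin_gt0 -addnBA // leq_addr.
have C20 : 0 < C2 by rewrite ltr0n bin_gt0 -addnBA // leq_addr.
set q : R := 2 * (t + 1) / (2 * t + 1).
set K : R := (2 * t + 1) `^ (2 * t + 1) / ((4 * t) `^ t * (t + 1) `^ (t + 1)).
have q0 : 0 < q by rewrite /q divr_gt0 //; lra.
have K0 : 0 < K by rewrite /K divr_gt0 // ?mulr_gt0 // powR_gt0 //; lra.
have sq0 : 0 < Num.sqrt q by rewrite sqrtr_gt0.
have Kn0 : 0 < K ^+ n by rewrite exprn_gt0.
have rhs0 : 0 < rhs_asym t n by rewrite /rhs_asym mulr_gt0.
have -> : C1 / C2 / rhs_asym t n = expR (ln C1 - ln C2 - ln (rhs_asym t n)).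
  by rewrite !expRD !expRN !lnK ?posrE.
congr expR.
have lsq : ln (Num.sqrt q) = ln q / 2.
  have h := @lnXn R 2 _ sq0; rewrite sqr_sqrtr ?ltW // in h; rewrite h mulr2n; field; by [].
have lq : ln q = ln 2 + ln (t + 1) - ln (2 * t + 1).
  by rewrite /q ln_div ?posrE ?lnM' //; lra.
have l4 : ln (4 : R) = 2 * ln 2.
  by rewrite (_ : (4 : R) = 2 * 2) ?lnM' //; [ring | ring].
have lK : ln K = (2 * t + 1) * ln (2 * t + 1) - (t * (2 * ln 2 + ln t) + (t + 1) * ln (t + 1)).
  rewrite /K ln_div ?posrE ?mulr_gt0 ?powR_gt0 //; try lra.
  by rewrite lnM' ?powR_gt0 // ?(ln_powR) ?lnM' // -?l4; [ring| lra | lra].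
have lrhs : ln (rhs_asym t n) = ln q / 2 + n%:R * ln K.
  rewrite /rhs_asym -/q -/K lnM' // lsq lnXn // mulr_natl //.
rewrite lrhs lq lK.
rewrite /C1 /C2 (ln_fac_id n (2 * m)) // (ln_fac_id n m) //.
rewrite !ln_fact.
have ha : (n + 2 * m)%:R = (2 * t + 1) * n%:R :> R by rewrite natrD natrM hm; ring.
have h2 : (2 * m)%:R = (2 * t) * n%:R :> R by rewrite natrM hm; ring.
have hb : (n + m)%:R = (t + 1) * n%:R :> R by rewrite natrD hm; ring.
have lna : ln (n + 2 * m)%:R = ln (2 * t + 1) + ln (n%:R : R) by rewrite ha lnM' //; lra.
have ln2 : ln (2 * m)%:R = ln 2 + ln t + ln (n%:R : R) by rewrite h2 !lnM' // mulr_gt0.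
have lnb : ln (n + m)%:R = ln (t + 1) + ln (n%:R : R) by rewrite hb lnM' //; lra.
have lnm : ln (m%:R : R) = ln t + ln (n%:R : R) by rewrite hm lnM'.
rewrite lna ln2 lnb lnm ha h2 hb hm.
field; by [].
Qed.
End D.

Section E.
Variable R : realType.

Lemma expR_close (D : R) : `|D| <= 2^-1 -> `|expR D - 1| <= 2 * `|D|.
Proof.
move=> hD.
have e0 := expR_gt0 D.
have l1 : 1 + D <= expR D by exact: expR_ge1Dx.
have l2 : 1 - D <= expR (- D) by rewrite -[1 - D]/(1 + - D); exact: expR_ge1Dx.
have l3 : expR D * expR (- D) = 1 by rewrite -expRD subrr expR0.
have l4 : expR D * (1 - D) <= 1 by have := ler_wpM2l (ltW e0) l2; rewrite l3.
have hD1 : - 2^-1 <= D.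
  have := ler_norm (- D); rewrite normrN; lra.
have hD2 : D <= 2^-1 by have := ler_norm D; lra.
case: (lerP D 0) => hD0.
  rewrite (ler0_norm hD0) ler_norml; apply/andP; split; last first.
    have : expR D <= 1 by rewrite -expR0 ler_expR.
    lra.
  lra.
rewrite (gtr0_norm hD0) ler_norml; apply/andP; split; first lra.
have e2 : expR D <= 2.
  have h : expR D * 2^-1 <= expR D * (1 - D) by apply: ler_wpM2l; [exact: ltW | lra].
  lra.
have : expR D * D <= 2 * D by apply: ler_wpM2r; [exact: ltW | exact: e2].
nra.
Qed.

Lemma part1 (t : R) : 0 < t -> forall eps : R, 0 < eps -> exists N : nat, forall n m : nat, (N <= n)%N ->
     m%:R = t * n%:R ->
     `| expect_prod R m n / rhs_asym t n - 1 | < eps.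
Proof.
move=> t0 eps e0.
set B := (4 / eps + 2) / t.
have e4 : 0 < 4 / eps by rewrite divr_gt0.
have B0 : 0 <= B by rewrite /B; apply: divr_ge0; [lra | exact: ltW].
exists (Num.bound B) => n m Nn hm.
have hB := archi_boundP B0.
have nB : B < n%:R by apply: lt_le_trans hB _; rewrite ler_nat.
have n0 : (0 < n)%N by rewrite -(ltr0n R); apply: le_lt_trans nB.
have mB : 4 / eps + 2 < m%:R.
  have h : t * B < t * n%:R by rewrite ltr_pM2l.
  have hB' : t * B = 4 / eps + 2 by rewrite /B mulrC divfK // gt_eqF.
  by rewrite hm -hB'.
have M0 : 0 < (m%:R : R) by lra.
have m0 : (0 < m)%N by rewrite -(ltr0n R).
rewrite key //.
set D := _ + _ - _ - _.
have hD : `|D| <= m%:R^-1.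
  have h1 := dd_close R m (n + 2 * m) (2 * m) m0 (leq_trans (leq_pmull _ (isT : (0 < 2)%N)) (leq_addl n _)) (leq_pmull _ (isT : (0 < 2)%N)).
  have h2 := dd_close R m m (n + m) m0 (leqnn m) (leq_addl n m).
  have -> : D = (dd R (n + 2 * m) - dd R (2 * m)) + (dd R m - dd R (n + m)) by rewrite /D; ring.
  apply: le_trans (ler_normD _ _) _; lra.
have hm1 : m%:R^-1 <= eps / 4.
  rewrite -[eps / 4]invf_div lef_pV2 ?posrE //; lra.
have hm2 : (m%:R : R)^-1 <= 2^-1.
  rewrite lef_pV2 ?posrE //; lra.
have := expR_close D (le_trans hD hm2); lra.
Qed.

Lemma rhs1 n : rhs_asym (1 : R) n = Num.sqrt (4 / 3) * (27 / 16) ^+ n.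
Proof.
rewrite /rhs_asym.
have e3 : (2 * 1 + 1 : R) = 3%:R by ring.
have e2 : (1 + 1 : R) = 2%:R by ring.
rewrite e3 e2 mulr1 powRr1 // !powR_mulrn //.
congr (Num.sqrt _ * _ ^+ n); field; by [].
Qed.

End E.

Theorem corollary2 (R : realType) (theta : R) (htheta : 0 < theta) :
  (forall eps : R, 0 < eps -> exists N : nat, forall n m : nat, (N <= n)%N ->
     m%:R = theta * n%:R ->
     `| expect_prod R m n / rhs_asym theta n - 1 | < eps)
  /\
  (forall eps : R, 0 < eps -> exists N : nat, forall n : nat, (N <= n)%N ->
     `| expect_prod R n n / (Num.sqrt (4 / 3) * (27 / 16) ^+ n) - 1 | < eps).
Proof.
split; first exact: (part1 R theta htheta).
move=> eps e0; have [N HN] := part1 R 1 ltr01 eps e0.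
exists N => n Nn; rewrite -(rhs1 R n); apply: HN => //; by rewrite mul1r.
Qed.
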